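(* Let $n=2^i m$ with $i\geq 1$ and $m\geq 3$ odd. Suppose $f\in\mathbb{F}_{2^m}[x]$ is a 3-divisible Dembowski–Ostrom polynomial which is APN on $\mathbb{F}_{2^n}$. Then $f$ induces an APN permutation of the subfield $\mathbb{F}_{2^m}$.
   Context: A polynomial over $\mathbb{F}_{2^n}$ is Dembowski–Ostrom if it is of the form $\sum_{i\neq j}a_{ij}x^{2^i+2^j}$. It is 3-divisible if $f(x)=f'(x^3)$ for some map $f'$. A map $f$ on $\mathbb{F}_{2^N}$ is APN if for every $a\neq 0$ and every $b$ the equation $f(x+a)+f(x)=b$ has at most 2 solutions in $\mathbb{F}_{2^N}$. *)

(* Defs.v *)
From mathcomp Require Import all_boot all_order all_algebra all_field.
Set Implicit Arguments. Unset Strict Implicit. Unset Printing Implicit Defensive.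
Import GRing.Theory.
Local Open Scope ring_scope.

(* The subfield {x | x^(2^m) = x} of a finite field L (it is F_{2^m} when
   L has characteristic 2 and m divides [L : F_2]). *)
Definition subfield_pow2 (L : finFieldType) (m : nat) : {set L} :=
  [set x : L | x ^+ (2 ^ m) == x].

Definition dembowski_ostrom (L : fieldType) (f : {poly L}) : Prop :=
  forall k : nat, f`_k != 0 ->
    exists i j : nat, i <> j /\ k = (2 ^ i + 2 ^ j)%N.

Definition three_divisible (L : fieldType) (f : {poly L}) : Prop :=
  exists f' : L -> L, forall x : L, f.[x] = f' (x ^+ 3).

Definition APN_on (L : finFieldType) (D : {set L}) (f : L -> L) : Prop :=
  forall a b : L, a \in D -> a != 0 -> b \in D ->
    (#|[set x in D | (f (x + a) + f x == b)%R]| <= 2)%N.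

(* Main.v *)
Require Import Defs.
From mathcomp Require Import all_boot all_order all_algebra all_field.
From mathcomp Require fingroup pgroup.
From mathcomp Require Import ring.
Import GRing.Theory.
Local Open Scope ring_scope.

Lemma cube_root_exists (L : finFieldType) : (3 %| #|L|.-1)%N ->
  exists w : L, w ^+ 3 = 1 /\ w != 1.
Proof.
move=> H3.
have [u _ ou] := @pgroup.Cauchy _ 3
   (fingroup.setT_group (FinRing.FinRing_unit_of__canonical__fingroup_FinGroup L)) isT
   ltac:(by rewrite /= card_finField_unit).
exists (val u); split.
  by rewrite -FinRing.val_unitX -ou fingroup.expg_order.
apply/eqP=> h; have u1 : u = 1%g by apply: val_inj; rewrite h.
by move: ou; rewrite u1 fingroup.order1.
Qed.

Lemma frobD (L : finFieldType) (m : nat) : (2 \in [pchar L])%N ->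
  forall x y : L, (x + y) ^+ (2 ^ m) = x ^+ (2 ^ m) + y ^+ (2 ^ m).
Proof.
move=> ch x y; apply: exprDn_pchar.
by rewrite pnatX (pnatE _ (isT : prime 2)) ch.
Qed.

Lemma mod3_odd (m : nat) : odd m -> (2 ^ m %% 3 = 2)%N.
Proof.
move=> om; have -> : m = (m./2).*2.+1 by rewrite -[LHS]odd_double_half om.
rewrite expnS -mul2n expnM -modnMmr -modnXm /= exp1n.
by [].
Qed.

Lemma three_div_even (k : nat) : (3 %| (2 ^ k.*2).-1)%N.
Proof.
rewrite -mul2n expnM /=.
have h : (0 < 4 ^ k)%N by rewrite expn_gt0.
rewrite -subn1 -eqn_mod_dvd //.
by rewrite -modnXm /= exp1n.
Qed.

Theorem theorem5p1 (L : finFieldType) (i m : nat) :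
  (2 \in [pchar L])%N ->
  #|L| = (2 ^ (2 ^ i * m))%N ->
  (1 <= i)%N -> (3 <= m)%N -> odd m ->
  forall f : {poly L},
    (forall k : nat, f`_k \in subfield_pow2 L m) ->
    dembowski_ostrom f ->
    three_divisible f ->
    APN_on [set: L] (fun x => f.[x]) ->
    [/\ (forall x : L, x \in subfield_pow2 L m -> f.[x] \in subfield_pow2 L m),
        {in subfield_pow2 L m &, injective (fun x : L => f.[x])}
      & APN_on (subfield_pow2 L m) (fun x => f.[x])].
Proof.
move=> ch cardL i1 m3 om f coefK _ [f' hf'] apn.
have inK : forall z : L, (z \in subfield_pow2 L m) = (z ^+ (2 ^ m) == z).
  by move=> z; rewrite inE.
split.
- move=> x; rewrite !inK => /eqP xK.
  rewrite horner_coef; apply: (big_ind (fun y : L => y ^+ (2 ^ m) == y)).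
  + by rewrite expr0n expn_eq0.
  + by move=> a b /eqP ha /eqP hb; rewrite frobD // ha hb.
  + move=> k _; rewrite exprMn exprAC xK.
    by move: (coefK k); rewrite inK => /eqP ->.
- move=> x y; rewrite !inK => /eqP xK /eqP yK fxy.
  apply/eqP; apply/negPn/negP => nxy.
  have [w [w3 w1]] : exists w : L, w ^+ 3 = 1 /\ w != 1.
    apply: cube_root_exists; rewrite cardL.
    case: i i1 cardL => // i' _ _; rewrite expnS -mulnA mul2n.
    exact: three_div_even.
  have c2 : forall z : L, z + z = 0 by move=> z; apply: addrr_pchar2.
  have w0 : w != 0 by apply/eqP => h; move: w3; rewrite h expr0n /= => /eqP; rewrite eq_sym oner_eq0.
  have ww : w ^+ 2 + w + 1 = 0.
    have : (w - 1) * (w ^+ 2 + w + 1) = 0.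
      have -> : (w - 1) * (w ^+ 2 + w + 1) = w ^+ 3 - 1 by ring.
      by rewrite w3 subrr.
    by move/eqP; rewrite mulf_eq0 subr_eq0 (negbTE w1) /= => /eqP.
  have wpow : w ^+ (2 ^ m) = w ^+ 2.
    by rewrite (divn_eq (2 ^ m) 3) mod3_odd // exprD mulnC exprM w3 expr1n mul1r.
  have wneq : w ^+ 2 != w.
    apply/negP=> /eqP h; move: ww; rewrite h c2 add0r => /eqP; rewrite oner_eq0.
    by [].
  set a := x + y.
  have a0 : a != 0.
    apply/eqP=> h; move/negP: nxy; apply.
    have : x + a = x + 0 by rewrite h.
    by rewrite /a addrA c2 add0r addr0 => ->.
  have fw : forall z, f.[w * z] = f.[z].
    by move=> z; rewrite !hf' exprMn w3 mul1r.
  have fw2 : forall z, f.[w ^+ 2 * z] = f.[z].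
    by move=> z; rewrite !hf' exprMn exprAC w3 expr1n mul1r.
  have w2e : w ^+ 2 = w + 1.
    by rewrite -[LHS]addr0 -{1}ww !addrA c2 add0r.
  have e1 : w * a + a = w ^+ 2 * a by rewrite w2e mulrDl mul1r.
  have e2 : w ^+ 2 * a + a = w * a.
    by rewrite w2e mulrDl mul1r -addrA c2 addr0.
  have aK : a ^+ (2 ^ m) = a by rewrite /a frobD // xK yK.
  have xw : x != w * a.
    apply/eqP=> h; have hw : w = x / a by rewrite h mulfK.
    have : w ^+ (2 ^ m) = w by rewrite hw expr_div_n xK aK.
    by rewrite wpow => /eqP; rewrite (negbTE wneq).
  have xw2 : x != w ^+ 2 * a.
    apply/eqP=> h; have hw : w ^+ 2 = x / a by rewrite h mulfK.
    have : (w ^+ 2) ^+ (2 ^ m) = w ^+ 2 by rewrite hw expr_div_n xK aK.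
    rewrite exprAC wpow -exprM /= (exprS w 3) w3 mulr1 => /eqP.
    by rewrite eq_sym (negbTE wneq).
  have ww2 : w * a != w ^+ 2 * a.
    apply/negP=> /eqP /(mulIf a0) h.
    by move: wneq; rewrite -h eqxx.
  set S := [set z in [set: L] | f.[z + a] + f.[z] == 0].
  have cS : (#|S| <= 2)%N := apn a 0 (in_setT a) a0 (in_setT 0).
  have sub : x |: (w * a |: [set w ^+ 2 * a]) \subset S.
    apply/subsetP => z; rewrite !inE => /or3P[] /eqP ->; rewrite /=.
    - by rewrite /a addrA c2 add0r fxy c2.
    - by rewrite e1 fw2 fw c2.
    - by rewrite e2 fw2 fw c2.
  have := subset_leq_card sub; rewrite cardsU1 cardsU1 cards1 !inE.
  rewrite (negbTE ww2) (negbTE xw) (negbTE xw2) /= => h3.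
  by have := leq_trans h3 cS.
- move=> a b _ a0 _; apply: (leq_trans _ (apn a b (in_setT a) a0 (in_setT b))).
  apply: subset_leq_card; apply/subsetP => z; rewrite !inE => /andP[_ ->].
  by rewrite andbT.
Qed.
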